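(* Let $\tau$ be a linear trajectory on $S_E$ whose direction $\theta$ lies in $\Sigma_0=[0,\pi/6]$, and let $\tau'=\Psi_\gamma\tau$. Then, up to shift, $c(\tau')=c(\tau)'$. That is, the cutting sequence of $\Psi_\gamma\tau$ is the derived sequence of the cutting sequence of $\tau$.
   Context: Let $E$ be the regular hexagon of side length $1$, centred at the origin, with two horizontal sides. Its sides are labelled as follows: the two horizontal sides are labelled $A$, the upper-right and lower-left sides are labelled $B$, and the lower-right and upper-left sides are labelled $C$. Gluing opposite parallel sides by translations gives the translation surface $S_E$ (a flat torus with two marked points, the classes of the vertices of $E$). A linear trajectory is a bi-infinite straight line on $S_E$ avoiding the marked points. Its direction is taken modulo $\pi$, in $[0,\pi]$. Its cutting sequence $c(\tau)\in\{A,B,C\}^{\mathbb Z}$ is the sequence, up to shift, of labels of the sides successively crossed. Derivation: in a word $w=(w_n)\in\{A,B,C\}^{\mathbb Z}$, the letter $w_n$ is sandwiched if $w_{n-1}=w_{n+1}$. The derived sequence $w'$ of $w$ is the word obtained by keeping, in order, exactly the sandwiched letters of $w$ and deleting all the others. An affine automorphism of $S_E$ is a homeomorphism of $S_E$ preserving the set of marked points which, off the marked points, is affine in translation charts with constant derivative. Let $\gamma=\begin{pmatrix}-1&2\sqrt3\\0&1\end{pmatrix}$. There is a unique affine automorphism $\Psi_\gamma$ of $S_E$ with derivative $\gamma$; it is the composition of the reflection in the vertical axis with the affine multi-twist on the horizontal cylinder of $S_E$ (height $\sqrt3/2$, circumference $3$). $\Psi_\gamma$ maps linear trajectories to linear trajectories.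 *)

(* Defs.v *)
From Stdlib Require Import Reals ZArith.
Open Scope R_scope.

(* The flat surface S_E is modelled through its universal-cover-like unfolding:
   translates of the hexagon E by the lattice Lambda tile the plane, and
   S_E = R^2 / Lambda.  Linear trajectories on S_E are projections of straight
   lines in R^2; sides of E crossed correspond to edges of the tiling crossed. *)

Inductive label : Set := A | B | C.

Definition pt : Type := (R * R)%type.

Definition s3 : R := sqrt 3.

Definition V0 : pt := (1, 0).
Definition V1 : pt := (1/2, s3/2).
Definition V2 : pt := (-(1/2), s3/2).
Definition V3 : pt := (-1, 0).
Definition V4 : pt := (-(1/2), -(s3/2)).
Definition V5 : pt := (1/2, -(s3/2)).

Definition is_vertex (X : pt) : Prop :=
  X = V0 \/ X = V1 \/ X = V2 \/ X = V3 \/ X = V4 \/ X = V5.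

Definition on_segment (P Q X : pt) : Prop :=
  exists s : R, 0 <= s <= 1 /\
    X = (fst P + s * (fst Q - fst P), snd P + s * (snd Q - snd P)).

Definition side_of_E (l : label) (X : pt) : Prop :=
  match l with
  | A => on_segment V1 V2 X \/ on_segment V4 V5 X
  | B => on_segment V0 V1 X \/ on_segment V3 V4 X
  | C => on_segment V5 V0 X \/ on_segment V2 V3 X
  end.

(* The gluing lattice: generated by the translations identifying opposite
   sides, (0, sqrt 3), (3/2, sqrt 3 / 2) (and (3/2, -sqrt 3/2), their difference). *)
Definition in_lattice (q : pt) : Prop :=
  exists a b : Z, fst q = IZR b * (3/2) /\ snd q = IZR a * s3 + IZR b * (s3/2).

Definition sub (X Y : pt) : pt := (fst X - fst Y, snd X - snd Y).

Definition on_side (l : label) (X : pt) : Prop :=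
  exists lam : pt, in_lattice lam /\ side_of_E l (sub X lam).

Definition marked (X : pt) : Prop :=
  exists lam : pt, in_lattice lam /\ is_vertex (sub X lam).

Definition line_pt (p v : pt) (t : R) : pt :=
  (fst p + t * fst v, snd p + t * snd v).

Definition avoids_marked (p v : pt) : Prop :=
  forall t : R, ~ marked (line_pt p v t).

(* w is (a representative, up to shift, of) the cutting sequence of the
   oriented trajectory t |-> p + t v: the crossing times with sides, listed in
   increasing order, are tt n (n in Z), and w n is the label of the side
   crossed at time tt n. *)
Definition cutting_sequence (p v : pt) (w : Z -> label) : Prop :=
  exists tt : Z -> R,
    (forall n : Z, tt n < tt (n + 1)%Z) /\
    (forall t : R, (exists l : label, on_side l (line_pt p v t)) ->
                   exists n : Z, t = tt n) /\
    (forall n : Z, on_side (w n) (line_pt p v (tt n))).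

Definition sandwiched (w : Z -> label) (n : Z) : Prop :=
  w (n - 1)%Z = w (n + 1)%Z.

Definition derived_upto_shift (w w' : Z -> label) : Prop :=
  exists sigma : Z -> Z,
    (forall k : Z, (sigma k < sigma (k + 1))%Z) /\
    (forall k : Z, sandwiched w (sigma k)) /\
    (forall n : Z, sandwiched w n -> exists k : Z, sigma k = n) /\
    (forall k : Z, w' k = w (sigma k)).

(* The affine automorphism Psi_gamma
   (reflection in the vertical axis composed with the multi-twist on the
   horizontal cylinder) lifts to the linear map gamma of R^2, which preserves
   the lattice and the set of lifts of marked points. *)
Definition gamma_map (X : pt) : pt :=
  (- fst X + 2 * s3 * snd X, snd X).

(* Main.v *)
Require Import Defs.
From Stdlib Require Import Reals ZArith Lra Lia Psatz ClassicalEpsilon.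
Open Scope R_scope.

Ltac zsimpl := repeat (rewrite ?plus_IZR, ?mult_IZR, ?opp_IZR, ?minus_IZR).
Tactic Notation "zsimpl_in" hyp(H) := repeat (rewrite ?plus_IZR, ?mult_IZR, ?opp_IZR, ?minus_IZR in H).

Lemma Zno01 (m:Z) : 0 < IZR m -> IZR m < 1 -> False.
Proof. intros H1 H2. apply lt_IZR in H1. apply lt_IZR in H2. lia. Qed.
Lemma Z_eq0 (m:Z) : -1 < IZR m -> IZR m < 1 -> m = 0%Z.
Proof. intros H1 H2. apply lt_IZR in H1. apply lt_IZR in H2. lia. Qed.
Lemma Z_ge1 (m:Z) : 0 < IZR m -> (1 <= m)%Z.
Proof. intros H1. apply lt_IZR in H1. lia. Qed.
Lemma Z_le0 (m:Z) : IZR m < 1 -> (m <= 0)%Z.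
Proof. intros H1. apply lt_IZR in H1. lia. Qed.
Lemma Z_ge0 (m:Z) : -1 < IZR m -> (0 <= m)%Z.
Proof. intros H1. apply lt_IZR in H1. lia. Qed.

Lemma prod_pos a x : 0 < a -> 0 < x -> 0 < a * x.
Proof. intros; apply Rmult_lt_0_compat; auto. Qed.
Lemma prod_pos_inv a x : 0 < a -> 0 < a * x -> 0 < x.
Proof. intros Ha H. destruct (Rle_or_lt x 0) as [Hx|Hx]; auto.
  assert (a * x <= 0). { replace (a*x) with (- (a * (-x))) by ring.
   assert (0 <= a * (-x)) by (apply Rmult_le_pos; lra). lra. } lra. Qed.
Lemma prod_neg_inv a x : 0 < a -> a * x < 0 -> x < 0.
Proof. intros Ha H. destruct (Rle_or_lt 0 x) as [Hx|Hx]; auto.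
  assert (0 <= a * x) by (apply Rmult_le_pos; lra). lra. Qed.

Lemma lin_root a b : 0 < a -> 0 < b < a -> exists u, 0 < u < 1 /\ a * u = b.
Proof. intros Ha Hb. exists (b / a). split.
  - split. apply Rdiv_lt_0_compat; lra.
    apply (Rmult_lt_reg_l a); try lra. field_simplify; lra.
  - field. lra. Qed.

Lemma mono_le (f : Z -> R) a b : (forall n, f n < f (n+1)%Z) -> (a <= b)%Z -> f a <= f b.
Proof.
  intros Hinc Hab. replace b with (a + Z.of_nat (Z.to_nat (b - a)))%Z by lia.
  induction (Z.to_nat (b - a)) as [|nn IH].
  - rewrite Z.add_0_r. lra.
  - rewrite Nat2Z.inj_succ. replace (a + Z.succ (Z.of_nat nn))%Z with ((a + Z.of_nat nn) + 1)%Z by lia.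
    specialize (Hinc (a + Z.of_nat nn)%Z). lra.
Qed.
Lemma mono_lt (f : Z -> R) a b : (forall n, f n < f (n+1)%Z) -> (a < b)%Z -> f a < f b.
Proof.
  intros Hinc Hab. assert (f a < f (a+1)%Z) by apply Hinc.
  assert (f (a+1)%Z <= f b) by (apply mono_le; auto; lia). lra.
Qed.
Lemma mono_inj (f : Z -> R) a b : (forall n, f n < f (n+1)%Z) -> f a = f b -> a = b.
Proof.
  intros Hinc E. destruct (Z.lt_trichotomy a b) as [H|[H|H]]; auto.
  - pose proof (mono_lt f a b Hinc H). lra.
  - pose proof (mono_lt f b a Hinc H). lra.
Qed.



Lemma s3_pos : 0 < s3.
Proof. unfold s3. apply sqrt_lt_R0. lra. Qed.

Definition hh := s3/2.

Definition sideA (x y : R) : Prop := exists k j : Z,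
  y = IZR k * hh /\ 3*IZR k/2 + 3*IZR j + 1 <= x <= 3*IZR k/2 + 3*IZR j + 2.
Definition sideB (x y : R) : Prop := exists (k j : Z) (u : R), 0 <= u <= 1 /\
  y = (IZR k + u) * hh /\ x = 3*IZR k/2 + 3*IZR j + 1 - u/2.
Definition sideC (x y : R) : Prop := exists (k j : Z) (u : R), 0 <= u <= 1 /\
  y = (IZR k + u) * hh /\ x = 3*IZR k/2 + 3*IZR j + 2 + u/2.
Definition vert (x y : R) : Prop := exists k j : Z,
  y = IZR k * hh /\ (x = 3*IZR k/2 + 3*IZR j + 1 \/ x = 3*IZR k/2 + 3*IZR j + 2).



Lemma onA_iff x y : on_side A (x,y) <-> sideA x y.
Proof.
  unfold on_side, sideA, in_lattice, side_of_E, on_segment, sub, V1, V2, V4, V5; simpl.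
  split.
  - intros [[l1 l2] [[a [b [Ha Hb]]] H]]; simpl in *.
    destruct H as [[s [Hs E]]|[s [Hs E]]]; injection E as E1 E2.
    + exists (2*a+b+1)%Z, (-a-1)%Z. unfold hh. zsimpl. split; lra.
    + exists (2*a+b-1)%Z, (-a)%Z. unfold hh. zsimpl. split; lra.
  - intros [k [j [Hy Hx]]].
    exists (IZR (k+2*j+1) * (3/2), IZR (-j-1) * s3 + IZR (k+2*j+1) * (s3/2)).
    split. { exists (-j-1)%Z, (k+2*j+1)%Z. simpl. split; reflexivity. }
    left. exists (3*IZR k/2 + 3*IZR j + 2 - x). cbn [fst snd]. split. split; lra.
    unfold hh in Hy. zsimpl. f_equal; lra.
Qed.

Lemma onB_iff x y : on_side B (x,y) <-> sideB x y.
Proof.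
  unfold on_side, sideB, in_lattice, side_of_E, on_segment, sub, V0, V1, V3, V4; simpl.
  split.
  - intros [[l1 l2] [[a [b [Ha Hb]]] H]]; simpl in *.
    destruct H as [[s [Hs E]]|[s [Hs E]]]; injection E as E1 E2.
    + exists (2*a+b)%Z, (-a)%Z, s. unfold hh. zsimpl. split; [lra|split; lra].
    + exists (2*a+b-1)%Z, (-a)%Z, (1-s). unfold hh. zsimpl. split; [lra|split; lra].
  - intros [k [j [u [Hu [Hy Hx]]]]].
    exists (IZR (k+2*j) * (3/2), IZR (-j) * s3 + IZR (k+2*j) * (s3/2)).
    split. { exists (-j)%Z, (k+2*j)%Z. simpl. split; reflexivity. }
    left. exists u. cbn [fst snd]. split. split; lra.
    unfold hh in Hy. zsimpl. f_equal; lra.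
Qed.

Lemma onC_iff x y : on_side Defs.C (x,y) <-> sideC x y.
Proof.
  unfold on_side, sideC, in_lattice, side_of_E, on_segment, sub, V0, V5, V2, V3; simpl.
  split.
  - intros [[l1 l2] [[a [b [Ha Hb]]] H]]; simpl in *.
    destruct H as [[s [Hs E]]|[s [Hs E]]]; injection E as E1 E2.
    + exists (2*a+b-1)%Z, (-a)%Z, s. unfold hh. zsimpl. split; [lra|split; lra].
    + exists (2*a+b)%Z, (-a-1)%Z, (1-s). unfold hh. zsimpl. split; [lra|split; lra].
  - intros [k [j [u [Hu [Hy Hx]]]]].
    exists (IZR (k+2*j+1) * (3/2), IZR (-j) * s3 + IZR (k+2*j+1) * (s3/2)).
    split. { exists (-j)%Z, (k+2*j+1)%Z. simpl. split; reflexivity. }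
    left. exists u. cbn [fst snd]. split. split; lra.
    unfold hh in Hy. zsimpl. f_equal; lra.
Qed.

Lemma vert_marked x y : vert x y -> marked (x,y).
Proof.
  unfold marked, vert, in_lattice, is_vertex, sub, V0, V5; simpl.
  intros [k [j [Hy [Hx|Hx]]]].
  - exists (IZR (k+2*j) * (3/2), IZR (-j) * s3 + IZR (k+2*j) * (s3/2)).
    split. { exists (-j)%Z, (k+2*j)%Z. simpl. split; reflexivity. }
    left. unfold hh in Hy. zsimpl. cbn [fst snd]. f_equal; lra.
  - exists (IZR (k+2*j+1) * (3/2), IZR (-j) * s3 + IZR (k+2*j+1) * (s3/2)).
    split. { exists (-j)%Z, (k+2*j+1)%Z. simpl. split; reflexivity. }
    do 5 right. unfold hh in Hy. zsimpl. cbn [fst snd]. f_equal; lra.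
Qed.


Lemma pn_neg a b : 0 < a -> b < 0 -> a * b < 0.
Proof. intros. nra. Qed.
Lemma np_neg a b : a < 0 -> 0 < b -> a * b < 0.
Proof. intros. nra. Qed.

Lemma hh_pos : 0 < hh.
Proof. unfold hh. pose proof s3_pos. lra. Qed.

Definition label_eq_dec (a b : label) : {a = b} + {a <> b}.
Proof. decide equality. Defined.

Definition other (l : label) : label := match l with B => Defs.C | Defs.C => B | A => A end.

Lemma between_t e t0 t1 tm : t0 < t1 -> ((e*tm - e*t0) * (e*tm - e*t1) < 0) -> t0 < tm < t1.
Proof. intros H01 H.
  assert (E : (e*tm - e*t0) * (e*tm - e*t1) = (e*e) * ((tm - t0) * (tm - t1))) by ring.
  rewrite E in H. assert (0 <= e*e) by nra.
  assert ((tm - t0) * (tm - t1) < 0) by nra.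
  split; nra.
Qed.

Lemma no_between (tt : Z -> R) n m : (forall n, tt n < tt (n+1)%Z) -> tt n < tt m < tt (n+1)%Z -> False.
Proof. intros Hinc [H1 H2]. destruct (Z_le_gt_dec m n) as [h|h].
  - pose proof (mono_le tt m n Hinc h). lra.
  - assert (h' : (n + 1 <= m)%Z) by lia. pose proof (mono_le tt _ _ Hinc h'). lra.
Qed.

Lemma height_uniq k k' u u' : (IZR k + u) * hh = (IZR k' + u') * hh -> 0 < u < 1 -> 0 < u' < 1 -> k = k' /\ u = u'.
Proof. intros E H1 H2. pose proof hh_pos.
  assert (E' : IZR k + u = IZR k' + u') by (apply (Rmult_eq_reg_r hh); lra).
  assert (k - k' = 0)%Z. { apply Z_eq0; zsimpl; lra. }
  assert (k = k') by lia. subst. split; auto. lra. Qed.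

Lemma horiz_alt x0 e py (w : Z -> label) :
  e <> 0 -> (forall k, py <> IZR k * hh) -> cutting_sequence (x0, py) (e, 0) w ->
  forall n, w n <> A /\ w (n+1)%Z = other (w n).
Proof.
  intros He Hpy [tt [Hinc [Hcov Hlab]]].
  assert (LP : forall t, line_pt (x0, py) (e, 0) t = (x0 + t * e, py)).
  { intro t. unfold line_pt. simpl. f_equal; ring. }
  assert (NA : forall t, ~ on_side A (line_pt (x0,py) (e,0) t)).
  { intros t H. rewrite LP, onA_iff in H. destruct H as [k [j [Hy _]]]. apply (Hpy k); auto. }
  assert (Hdec : forall t l, on_side l (line_pt (x0,py) (e,0) t) -> l <> A /\ exists k j u, 0 < u < 1 /\ py = (IZR k + u) * hh /\
      ((l = B /\ x0 + t * e = 3*IZR k/2 + 3*IZR j + 1 - u/2) \/ (l = Defs.C /\ x0 + t * e = 3*IZR k/2 + 3*IZR j + 2 + u/2))).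
  { intros t l H. destruct l.
    - exfalso. apply (NA t H).
    - split. discriminate. rewrite LP, onB_iff in H. destruct H as [k [j [u [Hu [Hy Hx]]]]].
      assert (u <> 0). { intro E0. rewrite E0 in Hy. apply (Hpy k). lra. }
      assert (u <> 1). { intro E0. rewrite E0 in Hy. apply (Hpy (k+1)%Z). zsimpl. lra. }
      exists k, j, u. split. lra. split; auto.
    - split. discriminate. rewrite LP, onC_iff in H. destruct H as [k [j [u [Hu [Hy Hx]]]]].
      assert (u <> 0). { intro E0. rewrite E0 in Hy. apply (Hpy k). lra. }
      assert (u <> 1). { intro E0. rewrite E0 in Hy. apply (Hpy (k+1)%Z). zsimpl. lra. }
      exists k, j, u. split. lra. split; auto. }
  intro n.
  destruct (Hdec _ _ (Hlab n)) as [NA1 [k [j1 [u [Hu [Hy H1]]]]]].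
  destruct (Hdec _ _ (Hlab (n+1)%Z)) as [NA2 [k' [j2 [u' [Hu' [Hy' H2]]]]]].
  rewrite Hy in Hy'. destruct (height_uniq _ _ _ _ Hy' Hu Hu') as [<- <-].
  split; auto.
  pose proof (Hinc n) as Hlt.
  assert (Hmid : forall Xm l, (Xm - (x0 + tt n * e)) * (Xm - (x0 + tt (n+1)%Z * e)) < 0 ->
     on_side l (Xm, py) -> False).
  { intros Xm l HX HO. set (tm := (Xm - x0) / e).
    assert (Etm : x0 + tm * e = Xm) by (unfold tm; field; auto).
    destruct (Hcov tm) as [m Em]. { exists l. rewrite LP, Etm. auto. }
    apply (no_between tt n m Hinc). rewrite <- Em.
    apply (between_t e); auto. replace (e * tm) with (Xm - x0) by (rewrite <- Etm; ring).
    replace (e * tt n) with (x0 + tt n * e - x0) by ring.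
    replace (e * tt (n+1)%Z) with (x0 + tt (n+1)%Z * e - x0) by ring. nra. }
  destruct H1 as [[L1 X1]|[L1 X1]]; destruct H2 as [[L2 X2]|[L2 X2]]; rewrite L1, L2; simpl; auto;
    exfalso.
  -
    destruct (Z.lt_trichotomy j1 j2) as [h|[h|h]].
    + apply (Hmid (3*IZR k/2 + 3*IZR j1 + 2 + u/2) Defs.C).
      * rewrite X1, X2. assert (1 <= IZR j2 - IZR j1).
        { rewrite <- minus_IZR. apply IZR_le. lia. } apply pn_neg; lra.
      * rewrite onC_iff. exists k, j1, u. split. lra. split; auto.
    + subst. assert (e * (tt (n+1)%Z - tt n) = 0) by lra.
      destruct (Rmult_integral _ _ H); [contradiction|lra].
    + apply (Hmid (3*IZR k/2 + 3*IZR j2 + 2 + u/2) Defs.C).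
      * rewrite X1, X2. assert (1 <= IZR j1 - IZR j2).
        { rewrite <- minus_IZR. apply IZR_le. lia. } apply np_neg; lra.
      * rewrite onC_iff. exists k, j2, u. split. lra. split; auto.
  -
    destruct (Z.lt_trichotomy j1 j2) as [h|[h|h]].
    + apply (Hmid (3*IZR k/2 + 3*IZR (j1+1) + 1 - u/2) B).
      * rewrite X1, X2. zsimpl. assert (1 <= IZR j2 - IZR j1).
        { rewrite <- minus_IZR. apply IZR_le. lia. } apply pn_neg; lra.
      * rewrite onB_iff. exists k, (j1+1)%Z, u. split. lra. split; auto.
    + subst. assert (e * (tt (n+1)%Z - tt n) = 0) by lra.
      destruct (Rmult_integral _ _ H); [contradiction|lra].
    + apply (Hmid (3*IZR k/2 + 3*IZR (j2+1) + 1 - u/2) B).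
      * rewrite X1, X2. zsimpl. assert (1 <= IZR j1 - IZR j2).
        { rewrite <- minus_IZR. apply IZR_le. lia. } apply np_neg; lra.
      * rewrite onB_iff. exists k, (j2+1)%Z, u. split. lra. split; auto.
Qed.

Section YS.
Variables al be : R.
Hypothesis Hbe : 3/2 <= be.

Definition dd (k j : Z) (u : R) : R := al + be * (IZR k + u) - 3 * IZR k / 2 - 3 * IZR j.
Hypothesis NV : forall k j, dd k j 0 <> 1 /\ dd k j 0 <> 2.

Lemma dd_u k j u : dd k j u = dd k j 0 + be * u.
Proof. unfold dd. field. Qed.
Lemma dd_jj k j j' u : dd k j' u = dd k j u - 3 * (IZR j' - IZR j).
Proof. unfold dd. field. Qed.
Lemma dd_k1 k j : dd (k+1) j 0 = dd k j 0 + be - 3/2.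
Proof. unfold dd. zsimpl. field. Qed.
Lemma dd_km k j : dd (k-1) j 0 = dd k j 0 - be + 3/2.
Proof. unfold dd. zsimpl. field. Qed.
Lemma dd_j1 k j u : dd k (j+1) u = dd k j u - 3.
Proof. unfold dd. zsimpl. field. Qed.

Definition OA (Y : R) := exists k j : Z, Y = IZR k /\ 1 < dd k j 0 < 2.
Definition OB (Y : R) := exists (k j : Z) (u : R), 0 < u < 1 /\ Y = IZR k + u /\ dd k j u = 1 - u/2.
Definition OC (Y : R) := exists (k j : Z) (u : R), 0 < u < 1 /\ Y = IZR k + u /\ dd k j u = 2 + u/2.
Definition GBv (Y : R) := exists (k j : Z) (u : R), 0 < u < 1 /\ Y = IZR k + u /\ dd k j u = 2 + 7*u/2.
Definition GCv (Y : R) := exists (k j : Z) (u : R), 0 < u < 1 /\ Y = IZR k + u /\ dd k j u = 1 + 5*u/2.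

Definition OL (l : label) (Y : R) : Prop :=
  match l with A => OA Y | B => OB Y | Defs.C => OC Y end.
Definition GL (l : label) (Y : R) : Prop :=
  match l with A => OA Y | B => GBv Y | Defs.C => GCv Y end.
Definition Ev (Y : R) := exists l, OL l Y.
Definition NoEv (a b : R) := forall Y, a < Y < b -> ~ Ev Y.

Lemma floor_uniq k k' u u' : IZR k + u = IZR k' + u' -> 0 <= u < 1 -> 0 <= u' < 1 -> k = k' /\ u = u'.
Proof. intros E H1 H2. assert (k - k' = 0)%Z. { apply Z_eq0; zsimpl; lra. }
  assert (k = k') by lia. subst. split; auto. lra. Qed.

Lemma strip_noev k jb jc u1 u2 : 0 <= u1 -> u1 <= u2 -> u2 <= 1 ->
  1 <= dd k jb u1 + u1/2 -> dd k jb u2 + u2/2 <= 4 ->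
  2 <= dd k jc u1 - u1/2 -> dd k jc u2 - u2/2 <= 5 ->
  NoEv (IZR k + u1) (IZR k + u2).
Proof.
  intros H1 H2 H3 B1 B2 C1 C2 Y HY [l HL]. destruct l; simpl in HL.
  - destruct HL as [k' [j' [E _]]]. subst. apply (Zno01 (k'-k)); zsimpl; lra.
  - destruct HL as [k' [j' [u' [Hu [E Hd]]]]]. subst.
    assert (k'-k=0)%Z. { apply Z_eq0; zsimpl; lra. } assert (k' = k) by lia. subst k'.
    assert (Hm1 : 0 < be * (u' - u1)) by (apply prod_pos; lra).
    assert (Hm2 : 0 < be * (u2 - u')) by (apply prod_pos; lra).
    rewrite (dd_u k jb) in B1, B2. rewrite (dd_jj k jb j'), (dd_u k jb) in Hd.
    apply (Zno01 (j' - jb)); zsimpl; nra.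
  - destruct HL as [k' [j' [u' [Hu [E Hd]]]]]. subst.
    assert (k'-k=0)%Z. { apply Z_eq0; zsimpl; lra. } assert (k' = k) by lia. subst k'.
    assert (Hm1 : 0 < be * (u' - u1)) by (apply prod_pos; lra).
    assert (Hm2 : 0 < be * (u2 - u')) by (apply prod_pos; lra).
    rewrite (dd_u k jc) in C1, C2. rewrite (dd_jj k jc j'), (dd_u k jc) in Hd.
    apply (Zno01 (j' - jc)); zsimpl; nra.
Qed.


Definition cA k j := 1 < dd k j 0 < 2.
Definition cB k j u := 0 < u < 1 /\ dd k j u = 1 - u/2.
Definition cC k j u := 0 < u < 1 /\ dd k j u = 2 + u/2.
Definition gB k j u := 0 < u < 1 /\ dd k j u = 2 + 7*u/2.
Definition gC k j u := 0 < u < 1 /\ dd k j u = 1 + 5*u/2.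

Lemma NoEv_join a b c : NoEv a b -> NoEv b c -> ~ Ev b -> NoEv a c.
Proof. intros H1 H2 H3 Y HY. destruct (Rtotal_order Y b) as [H|[H|H]].
  - apply H1; lra. - subst; auto. - apply H2; lra. Qed.

Lemma Ev_int k : Ev (IZR k) -> exists j, cA k j.
Proof. intros [l HL]. destruct l; simpl in HL.
  - destruct HL as [k' [j [E H]]]. apply eq_IZR in E. subst. exists j. exact H.
  - destruct HL as [k' [j [u [Hu [E _]]]]]. exfalso. apply (Zno01 (k-k')); zsimpl; lra.
  - destruct HL as [k' [j [u [Hu [E _]]]]]. exfalso. apply (Zno01 (k-k')); zsimpl; lra.
Qed.

Lemma noA k j : (dd k j 0 < 1 \/ 2 < dd k j 0) -> dd k j 0 > -1 -> dd k j 0 < 4 -> ~ Ev (IZR k).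
Proof. intros H1 H2 H3 HE. apply Ev_int in HE. destruct HE as [j' Hj'].
  unfold cA in Hj'. rewrite (dd_jj k j j') in Hj'.
  destruct H1.
  - apply (Zno01 (j - j')); zsimpl; lra.
  - apply (Zno01 (j' - j)); zsimpl; lra.
Qed.

Ltac ddsimpl := unfold dd in *; zsimpl.
Lemma bu_bounds u : 0 < u < 1 -> 0 < be * u < be.
Proof. intros. split; nra. Qed.

Lemma N1 k j : cA k j -> exists u, cC k j u /\ NoEv (IZR k) (IZR k + u).
Proof. unfold cA, cC. intros H.
  destruct (lin_root (be - 1/2) (2 - dd k j 0)) as [u [Hu E]]; [lra|split; lra|].
  exists u. split. { split; auto. rewrite dd_u. lra. }
  replace (IZR k) with (IZR k + 0) at 1 by ring.
  apply (strip_noev k j (j-1)); try lra; ddsimpl; lra.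
Qed.

Lemma N2 k j : cA k j -> exists u, cC (k-1) j u /\ NoEv (IZR (k-1) + u) (IZR k).
Proof. unfold cA, cC. intros H.
  destruct (lin_root (be - 1/2) (be + 1/2 - dd k j 0)) as [u [Hu E]]; [lra|split; lra|].
  exists u. split. { split; auto. rewrite dd_u, dd_km. lra. }
  replace (IZR k) with (IZR (k-1) + 1) at 1 by (zsimpl; ring).
  apply (strip_noev (k-1) j j); try lra; ddsimpl; lra.
Qed.

Lemma N3 k j u : cC k j u -> dd k j 0 < 1 ->
  exists ub, ub < u /\ cB k j ub /\ NoEv (IZR k + ub) (IZR k + u).
Proof. unfold cC, cB. intros [Hu H] H0. pose proof (bu_bounds u Hu). rewrite dd_u in H.
  destruct (lin_root (be + 1/2) (1 - dd k j 0)) as [ub [Hub E]]; [lra|split; lra|].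
  assert (ub < u). { assert (0 < u - ub) by (apply (prod_pos_inv (be + 1/2)); lra); lra. }
  exists ub. split; auto. split. { split; auto. rewrite dd_u. lra. }
  apply (strip_noev k j (j-1)); try lra; ddsimpl; lra.
Qed.

Lemma N4 k j u : cC k j u -> 1 < dd k j 0 -> cA k j /\ NoEv (IZR k) (IZR k + u).
Proof. unfold cC, cA. intros [Hu H] H0. pose proof (bu_bounds u Hu). rewrite dd_u in H.
  assert (0 < (be - 1/2) * u) by (apply prod_pos; lra).
  split. { split; lra. }
  replace (IZR k) with (IZR k + 0) at 1 by ring.
  apply (strip_noev k j (j-1)); try lra; ddsimpl; lra.
Qed.

Lemma N5 k j u : cC k j u -> 7/2 < dd k j 0 + be ->
  exists ub, u < ub /\ cB k (j+1) ub /\ NoEv (IZR k + u) (IZR k + ub).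
Proof. unfold cC, cB. intros [Hu H] H0. pose proof (bu_bounds u Hu). rewrite dd_u in H.
  destruct (lin_root (be + 1/2) (4 - dd k j 0)) as [ub [Hub E]]; [lra| |].
  { split. 2: lra. assert (0 < (be - 1/2) * u) by (apply prod_pos; lra). lra. }
  assert (u < ub). { assert (0 < ub - u) by (apply (prod_pos_inv (be + 1/2)); lra); lra. }
  exists ub. split; auto. split. { split; auto. rewrite dd_j1, dd_u. lra. }
  apply (strip_noev k j j); try lra; ddsimpl; lra.
Qed.

Lemma N6 k j u : cC k j u -> dd k j 0 + be < 7/2 ->
  cA (k+1) j /\ NoEv (IZR k + u) (IZR (k+1)).
Proof. unfold cC, cA. intros [Hu H] H0. pose proof (bu_bounds u Hu). rewrite dd_u in H.
  assert (be * (1 - u) >= 3/2 * (1-u)) by nra.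
  split. { rewrite dd_k1. split; lra. }
  replace (IZR (k+1)) with (IZR k + 1) by (zsimpl; ring).
  apply (strip_noev k j j); try lra; ddsimpl; lra.
Qed.

Lemma N7 k j u : cB k (j+1) u -> dd k j 0 < 2 ->
  exists uc, uc < u /\ cC k j uc /\ NoEv (IZR k + uc) (IZR k + u).
Proof. unfold cC, cB. intros [Hu H] H0. pose proof (bu_bounds u Hu). rewrite dd_j1, dd_u in H.
  destruct (lin_root (be - 1/2) (2 - dd k j 0)) as [uc [Huc E]]; [lra| |].
  { split. lra. assert (0 < (be + 1/2) * u) by (apply prod_pos; lra). lra. }
  assert (uc < u). { assert (0 < u - uc) by (apply (prod_pos_inv (be - 1/2)); lra); lra. }
  exists uc. split; auto. split. { split; auto. rewrite dd_u. lra. }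
  apply (strip_noev k j j); try lra; ddsimpl; lra.
Qed.

Lemma N8 k j u : cB k (j+1) u -> 2 < dd k j 0 ->
  exists u', cB (k-1) (j+1) u' /\ NoEv (IZR (k-1) + u') (IZR k + u).
Proof. unfold cB. intros [Hu H] H0. pose proof (bu_bounds u Hu). rewrite dd_j1, dd_u in H.
  assert (0 < (be + 1/2) * u) by (apply prod_pos; lra).
  destruct (lin_root (be + 1/2) (5/2 + be - dd k j 0)) as [u' [Hu' E]]; [lra|split; lra|].
  exists u'. split. { split; auto. rewrite dd_j1, dd_u, dd_km. lra. }
  apply (NoEv_join _ (IZR k)).
  - replace (IZR k) with (IZR (k-1) + 1) at 1 by (zsimpl; ring).
    apply (strip_noev (k-1) (j+1) j); try lra; ddsimpl; lra.
  - replace (IZR k) with (IZR k + 0) at 1 by ring.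
    apply (strip_noev k j j); try lra; ddsimpl; lra.
  - apply (noA k j); lra.
Qed.

Lemma N9 k j u : cB k (j+1) u -> 11/2 < dd k j 0 + be ->
  exists uc, u < uc /\ cC k (j+1) uc /\ NoEv (IZR k + u) (IZR k + uc).
Proof. unfold cC, cB. intros [Hu H] H0. pose proof (bu_bounds u Hu). rewrite dd_j1, dd_u in H.
  destruct (lin_root (be - 1/2) (5 - dd k j 0)) as [uc [Huc E]]; [lra| |].
  { split. 2: lra. assert (0 < (be + 1/2) * u) by (apply prod_pos; lra). lra. }
  assert (u < uc). { assert (0 < uc - u) by (apply (prod_pos_inv (be - 1/2)); lra); lra. }
  exists uc. split; auto. split. { split; auto. rewrite dd_j1, dd_u. lra. }
  apply (strip_noev k (j+1) j); try lra; ddsimpl; lra.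
Qed.

Lemma N10 k j u : cB k (j+1) u -> dd k j 0 + be < 11/2 ->
  exists u', cB (k+1) (j+1) u' /\ NoEv (IZR k + u) (IZR (k+1) + u').
Proof. unfold cB. intros [Hu H] H0. pose proof (bu_bounds u Hu). rewrite dd_j1, dd_u in H.
  assert (be * (1 - u) >= 3/2 * (1-u)) by nra.
  assert (be * (2 - u) >= 3/2 * (2-u)) by nra.
  destruct (lin_root (be + 1/2) (4 - (dd k j 0 + be - 3/2))) as [u' [Hu' E]]; [lra|split; lra|].
  exists u'. split. { split; auto. rewrite dd_j1, dd_u, dd_k1. lra. }
  apply (NoEv_join _ (IZR (k+1))).
  - replace (IZR (k+1)) with (IZR k + 1) at 1 by (zsimpl; ring).
    apply (strip_noev k (j+1) j); try lra; ddsimpl; lra.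
  - replace (IZR (k+1)) with (IZR (k+1) + 0) at 1 by ring.
    apply (strip_noev (k+1) j j); try lra; ddsimpl; lra.
  - apply (noA (k+1) j); rewrite dd_k1; lra.
Qed.


Lemma cA_ev k j : cA k j -> OA (IZR k).
Proof. intros H. exists k, j. auto. Qed.
Lemma cB_ev k j u : cB k j u -> OB (IZR k + u).
Proof. intros [H1 H2]. exists k, j, u. auto. Qed.
Lemma cC_ev k j u : cC k j u -> OC (IZR k + u).
Proof. intros [H1 H2]. exists k, j, u. auto. Qed.

Lemma OL_uniq l l' Y : OL l Y -> OL l' Y -> l = l'.
Proof.
  assert (AB : forall Y, OA Y -> OB Y -> False).
  { intros Y0 [k [j [E _]]] [k' [j' [u [Hu [E' _]]]]]. subst.
    apply (Zno01 (k-k')); zsimpl; lra. }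
  assert (AC : forall Y, OA Y -> OC Y -> False).
  { intros Y0 [k [j [E _]]] [k' [j' [u [Hu [E' _]]]]]. subst.
    apply (Zno01 (k-k')); zsimpl; lra. }
  assert (BC : forall Y, OB Y -> OC Y -> False).
  { intros Y0 [k [j [u [Hu [E H]]]]] [k' [j' [u' [Hu' [E' H']]]]]. subst.
    destruct (floor_uniq k k' u u') as [-> ->]; try lra.
    rewrite (dd_jj k' j j') in H'. apply (Zno01 (j - j')); zsimpl; lra. }
  destruct l, l'; simpl; intros H1 H2; try reflexivity; exfalso; eauto.
Qed.

Lemma GL_uniq l l' Y : GL l Y -> GL l' Y -> l = l'.
Proof.
  assert (AB : forall Y, OA Y -> GBv Y -> False).
  { intros Y0 [k [j [E _]]] [k' [j' [u [Hu [E' _]]]]]. subst.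
    apply (Zno01 (k-k')); zsimpl; lra. }
  assert (AC : forall Y, OA Y -> GCv Y -> False).
  { intros Y0 [k [j [E _]]] [k' [j' [u [Hu [E' _]]]]]. subst.
    apply (Zno01 (k-k')); zsimpl; lra. }
  assert (BC : forall Y, GBv Y -> GCv Y -> False).
  { intros Y0 [k [j [u [Hu [E H]]]]] [k' [j' [u' [Hu' [E' H']]]]]. subst.
    destruct (floor_uniq k k' u u') as [-> ->]; try lra.
    rewrite (dd_jj k' j j') in H'. apply (Zno01 (j' - j)); zsimpl; lra. }
  destruct l, l'; simpl; intros H1 H2; try reflexivity; exfalso; eauto.
Qed.

Definition csO (Ys : Z -> R) (w : Z -> label) : Prop :=
  (forall n, Ys n < Ys (n+1)%Z) /\ (forall Y, Ev Y -> exists n, Y = Ys n) /\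
  (forall n, OL (w n) (Ys n)).

Lemma next_lem Ys w n Y1 l : csO Ys w -> Ys n < Y1 -> OL l Y1 -> NoEv (Ys n) Y1 ->
  Ys (n+1)%Z = Y1 /\ w (n+1)%Z = l.
Proof.
  intros [Hinc [Hcov Hlab]] H1 Hl HN.
  destruct (Hcov Y1) as [m Hm]. { exists l; auto. }
  assert (Hnm : (n + 1 <= m)%Z).
  { destruct (Z_le_gt_dec (n+1) m); auto. exfalso.
    assert (Ys m <= Ys n) by (apply mono_le; auto; lia). lra. }
  assert (Ys (n+1)%Z <= Y1) by (subst Y1; apply mono_le; auto).
  assert (E : Ys (n+1)%Z = Y1).
  { destruct (Req_dec (Ys (n+1)%Z) Y1) as [e|ne]; auto. exfalso.
    apply (HN (Ys (n+1)%Z)). split; [apply Hinc|lra]. exists (w (n+1)%Z). apply Hlab. }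
  split; auto. apply (OL_uniq _ _ Y1); auto. rewrite <- E. apply Hlab.
Qed.

Lemma prev_lem Ys w n Y1 l : csO Ys w -> Y1 < Ys n -> OL l Y1 -> NoEv Y1 (Ys n) ->
  Ys (n-1)%Z = Y1 /\ w (n-1)%Z = l.
Proof.
  intros [Hinc [Hcov Hlab]] H1 Hl HN.
  destruct (Hcov Y1) as [m Hm]. { exists l; auto. }
  assert (Hnm : (m <= n - 1)%Z).
  { destruct (Z_le_gt_dec m (n-1)); auto. exfalso.
    assert (Ys n <= Ys m) by (apply mono_le; auto; lia). lra. }
  assert (Y1 <= Ys (n-1)%Z) by (subst Y1; apply mono_le; auto).
  assert (E : Ys (n-1)%Z = Y1).
  { destruct (Req_dec (Ys (n-1)%Z) Y1) as [e|ne]; auto. exfalso.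
    apply (HN (Ys (n-1)%Z)). split; [lra|]. apply mono_lt; auto; lia.
    exists (w (n-1)%Z). apply Hlab. }
  split; auto. apply (OL_uniq _ _ Y1); auto. rewrite <- E. apply Hlab.
Qed.


Lemma SA Ys w n : csO Ys w -> OA (Ys n) -> sandwiched w n.
Proof.
  intros Hcs [k [j [E H]]]. unfold sandwiched.
  destruct (N1 k j H) as [u [Hc HN]]. destruct (N2 k j H) as [u' [Hc' HN']].
  destruct (next_lem Ys w n (IZR k + u) Defs.C Hcs) as [_ E1]; try (rewrite E; auto).
  { destruct Hc; lra. } { exact (cC_ev _ _ _ Hc). }
  destruct (prev_lem Ys w n (IZR (k-1) + u') Defs.C Hcs) as [_ E2]; try (rewrite E; auto).
  { destruct Hc'. zsimpl. lra. } { exact (cC_ev _ _ _ Hc'). }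
  congruence.
Qed.

Definition condC k j := (dd k j 0 < 1 /\ 7/2 < dd k j 0 + be) \/ (1 < dd k j 0 /\ dd k j 0 + be < 7/2).
Definition condB k j := (dd k j 0 < 2 /\ 11/2 < dd k j 0 + be) \/ (2 < dd k j 0 /\ dd k j 0 + be < 11/2).

Lemma NV1 k j : dd k j 0 + be <> 7/2.
Proof. intro E. apply (proj2 (NV (k+1) j)). rewrite dd_k1. lra. Qed.
Lemma NV2 k j : dd k j 0 + be <> 11/2.
Proof. intro E. apply (proj1 (NV (k+1) (j+1))). rewrite dd_j1, dd_k1. lra. Qed.

Lemma SC Ys w n k j u : csO Ys w -> cC k j u -> Ys n = IZR k + u ->
  (sandwiched w n <-> condC k j).
Proof.
  intros Hcs Hc E. unfold sandwiched, condC.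
  assert (Hu : 0 < u < 1) by apply Hc.
  assert (Hp : (dd k j 0 < 1 /\ w (n-1)%Z = B) \/ (1 < dd k j 0 /\ w (n-1)%Z = A)).
  { destruct (Rtotal_order (dd k j 0) 1) as [h|[h|h]].
    - left. split; auto. destruct (N3 k j u Hc h) as [ub [h1 [h2 h3]]].
      destruct (prev_lem Ys w n (IZR k + ub) B Hcs); try rewrite E; auto. lra.
      exact (cB_ev _ _ _ h2).
    - exfalso. apply (proj1 (NV k j)); auto.
    - right. split; auto. destruct (N4 k j u Hc h) as [h1 h2].
      destruct (prev_lem Ys w n (IZR k) A Hcs); try rewrite E; auto. lra.
      exact (cA_ev _ _ ltac:(eassumption)). }
  assert (Hn : (7/2 < dd k j 0 + be /\ w (n+1)%Z = B) \/ (dd k j 0 + be < 7/2 /\ w (n+1)%Z = A)).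
  { destruct (Rtotal_order (dd k j 0 + be) (7/2)) as [h|[h|h]].
    - right. split; auto. destruct (N6 k j u Hc h) as [h1 h2].
      destruct (next_lem Ys w n (IZR (k+1)) A Hcs); try rewrite E; auto. zsimpl; lra.
      exact (cA_ev _ _ ltac:(eassumption)).
    - exfalso. apply (NV1 k j); auto.
    - left. split; auto. destruct (N5 k j u Hc h) as [ub [h1 [h2 h3]]].
      destruct (next_lem Ys w n (IZR k + ub) B Hcs); try rewrite E; auto. lra.
      exact (cB_ev _ _ _ h2). }
  destruct Hp as [[p1 p2]|[p1 p2]]; destruct Hn as [[q1 q2]|[q1 q2]]; rewrite p2, q2;
    split; intro HH;
    first [discriminate | reflexivity | (left; split; lra) | (right; split; lra) | (exfalso; destruct HH; lra)].
Qed.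

Lemma SB Ys w n k j u : csO Ys w -> cB k (j+1) u -> Ys n = IZR k + u ->
  (sandwiched w n <-> condB k j).
Proof.
  intros Hcs Hc E. unfold sandwiched, condB.
  assert (Hu : 0 < u < 1) by apply Hc.
  assert (Hp : (dd k j 0 < 2 /\ w (n-1)%Z = Defs.C) \/ (2 < dd k j 0 /\ w (n-1)%Z = B)).
  { destruct (Rtotal_order (dd k j 0) 2) as [h|[h|h]].
    - left. split; auto. destruct (N7 k j u Hc h) as [ub [h1 [h2 h3]]].
      destruct (prev_lem Ys w n (IZR k + ub) Defs.C Hcs); try rewrite E; auto. lra.
      exact (cC_ev _ _ _ h2).
    - exfalso. apply (proj2 (NV k j)); auto.
    - right. split; auto. destruct (N8 k j u Hc h) as [u' [h1 h2]].
      destruct (prev_lem Ys w n (IZR (k-1) + u') B Hcs); try rewrite E; auto.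
      destruct h1. zsimpl. lra.
      exact (cB_ev _ _ _ h1). }
  assert (Hn : (11/2 < dd k j 0 + be /\ w (n+1)%Z = Defs.C) \/ (dd k j 0 + be < 11/2 /\ w (n+1)%Z = B)).
  { destruct (Rtotal_order (dd k j 0 + be) (11/2)) as [h|[h|h]].
    - right. split; auto. destruct (N10 k j u Hc h) as [u' [h1 h2]].
      destruct (next_lem Ys w n (IZR (k+1) + u') B Hcs); try rewrite E; auto.
      destruct h1. zsimpl; lra.
      exact (cB_ev _ _ _ h1).
    - exfalso. apply (NV2 k j); auto.
    - left. split; auto. destruct (N9 k j u Hc h) as [ub [h1 [h2 h3]]].
      destruct (next_lem Ys w n (IZR k + ub) Defs.C Hcs); try rewrite E; auto. lra.
      exact (cC_ev _ _ _ h2). }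
  destruct Hp as [[p1 p2]|[p1 p2]]; destruct Hn as [[q1 q2]|[q1 q2]]; rewrite p2, q2;
    split; intro HH;
    first [discriminate | reflexivity | (left; split; lra) | (right; split; lra) | (exfalso; destruct HH; lra)].
Qed.


Lemma PC k j : condC k j -> exists u', gC k j u'.
Proof. unfold condC, gC. intros [[h1 h2]|[h1 h2]].
  - destruct (lin_root (be - 5/2) (1 - dd k j 0)) as [u [Hu E]]; [lra|split; lra|].
    exists u. split; auto. rewrite dd_u. lra.
  - destruct (lin_root (5/2 - be) (dd k j 0 - 1)) as [u [Hu E]]; [lra|split; lra|].
    exists u. split; auto. rewrite dd_u. lra.
Qed.
Lemma PB k j : condB k j -> exists u', gB k j u'.
Proof. unfold condB, gB. intros [[h1 h2]|[h1 h2]].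
  - destruct (lin_root (be - 7/2) (2 - dd k j 0)) as [u [Hu E]]; [lra|split; lra|].
    exists u. split; auto. rewrite dd_u. lra.
  - destruct (lin_root (7/2 - be) (dd k j 0 - 2)) as [u [Hu E]]; [lra|split; lra|].
    exists u. split; auto. rewrite dd_u. lra.
Qed.
Lemma GCc k j u' : gC k j u' -> condC k j.
Proof. unfold condC, gC. intros [Hu E]. rewrite dd_u in E.
  pose proof (NV k j) as [n1 n2].
  destruct (Rtotal_order be (5/2)) as [h|[h|h]].
  - right. assert (0 < (5/2 - be) * u') by (apply prod_pos; lra).
    assert (0 < (5/2 - be) * (1 - u')) by (apply prod_pos; lra). split; lra.
  - exfalso. rewrite h in E. apply n1. lra.
  - left. assert (0 < (be - 5/2) * u') by (apply prod_pos; lra).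
    assert (0 < (be - 5/2) * (1 - u')) by (apply prod_pos; lra). split; lra.
Qed.
Lemma GBc k j u' : gB k j u' -> condB k j.
Proof. unfold condB, gB. intros [Hu E]. rewrite dd_u in E.
  pose proof (NV k j) as [n1 n2].
  destruct (Rtotal_order be (7/2)) as [h|[h|h]].
  - right. assert (0 < (7/2 - be) * u') by (apply prod_pos; lra).
    assert (0 < (7/2 - be) * (1 - u')) by (apply prod_pos; lra). split; lra.
  - exfalso. rewrite h in E. apply n2. lra.
  - left. assert (0 < (be - 7/2) * u') by (apply prod_pos; lra).
    assert (0 < (be - 7/2) * (1 - u')) by (apply prod_pos; lra). split; lra.
Qed.
Lemma CexC k j : condC k j -> exists u, cC k j u.
Proof. unfold condC, cC. intros H.
  destruct (lin_root (be - 1/2) (2 - dd k j 0)) as [u [Hu E]]; [lra|destruct H; split; lra|].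
  exists u. split; auto. rewrite dd_u. lra.
Qed.
Lemma CexB k j : condB k j -> exists u, cB k (j+1) u.
Proof. unfold condB, cB. intros H.
  destruct (lin_root (be + 1/2) (4 - dd k j 0)) as [u [Hu E]]; [lra|destruct H; split; lra|].
  exists u. split; auto. rewrite dd_j1, dd_u. lra.
Qed.

Definition Pair (Y Y' : R) : Prop :=
  (OA Y /\ Y' = Y) \/
  (exists k j u u', cC k j u /\ gC k j u' /\ Y = IZR k + u /\ Y' = IZR k + u') \/
  (exists k j u u', cB k (j+1) u /\ gB k j u' /\ Y = IZR k + u /\ Y' = IZR k + u').

Lemma OB_shift Y : OB Y -> exists k j u, cB k (j+1) u /\ Y = IZR k + u.
Proof. intros [k [j [u [Hu [E H]]]]]. exists k, (j-1)%Z, u. replace (j-1+1)%Z with j by lia.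
  split; auto. split; auto. Qed.

Lemma pair_a Ys w n : csO Ys w -> sandwiched w n -> exists Y', Pair (Ys n) Y'.
Proof.
  intros Hcs Hs. pose proof Hcs as [_ [_ Hlab]]. specialize (Hlab n).
  destruct (w n) eqn:Ew; simpl in Hlab.
  - exists (Ys n). left. auto.
  - destruct (OB_shift _ Hlab) as [k [j [u [Hc E]]]].
    destruct (PB k j) as [u' Hg]. { apply (SB Ys w n k j u); auto. }
    exists (IZR k + u'). right; right. exists k, j, u, u'. auto.
  - destruct Hlab as [k [j [u [Hu [E H]]]]].
    assert (Hc : cC k j u) by (split; auto).
    destruct (PC k j) as [u' Hg]. { apply (SC Ys w n k j u); auto. }
    exists (IZR k + u'). right; left. exists k, j, u, u'. auto.
Qed.

Lemma pair_b Ys w l Y' : csO Ys w -> GL l Y' -> exists n, sandwiched w n /\ Pair (Ys n) Y'.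
Proof.
  intros Hcs HG. pose proof Hcs as [_ [Hcov _]].
  destruct l; simpl in HG.
  - destruct (Hcov Y') as [n En]. { exists A; exact HG. }
    exists n. split. { apply (SA Ys w n Hcs). rewrite <- En; auto. }
    left. rewrite <- En. auto.
  - destruct HG as [k [j [u' [Hu' [E H]]]]].
    assert (Hg : gB k j u') by (split; auto).
    destruct (CexB k j (GBc k j u' Hg)) as [u Hc].
    destruct (Hcov (IZR k + u)) as [n En]. { exists B. exact (cB_ev _ _ _ Hc). }
    exists n. split. { apply (SB Ys w n k j u); auto. apply (GBc k j u' Hg). }
    right; right. exists k, j, u, u'. auto.
  - destruct HG as [k [j [u' [Hu' [E H]]]]].
    assert (Hg : gC k j u') by (split; auto).
    destruct (CexC k j (GCc k j u' Hg)) as [u Hc].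
    destruct (Hcov (IZR k + u)) as [n En]. { exists Defs.C. exact (cC_ev _ _ _ Hc). }
    exists n. split. { apply (SC Ys w n k j u); auto. apply (GCc k j u' Hg). }
    right; left. exists k, j, u, u'. auto.
Qed.

Lemma pair_label Y Y' l : Pair Y Y' -> OL l Y -> GL l Y'.
Proof.
  intros [[HA E]|[[k [j [u [u' [Hc [Hg [E1 E2]]]]]]]|[k [j [u [u' [Hc [Hg [E1 E2]]]]]]]]] HL.
  - rewrite (OL_uniq l A Y HL HA). simpl. subst; auto.
  - assert (HC : OL Defs.C Y) by (subst; exact (cC_ev _ _ _ Hc)).
    rewrite (OL_uniq l Defs.C Y HL HC). simpl. destruct Hg. exists k, j, u'. auto.
  - assert (HB : OL B Y) by (subst; exact (cB_ev _ _ _ Hc)).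
    rewrite (OL_uniq l B Y HL HB). simpl. destruct Hg. exists k, j, u'. auto.
Qed.


Definition alone k (Y : R) := forall Y2, IZR k < Y2 < IZR k + 1 -> Y2 <> Y -> ~ Ev Y2.

Lemma C_LR k j u u' : cC k j u -> gC k j u' -> be > 5/2 \/ alone k (IZR k + u).
Proof. intros Hc Hg. destruct (GCc k j u' Hg) as [[h1 h2]|[h1 h2]].
  - left. lra.
  - right. intros Y2 HY Hne HE. destruct (N4 k j u Hc h1) as [_ HN1].
    destruct (N6 k j u Hc h2) as [_ HN2]. destruct Hc as [Hu _].
    destruct (Rtotal_order Y2 (IZR k + u)) as [h|[h|h]].
    + apply (HN1 Y2); auto. lra.
    + auto.
    + apply (HN2 Y2); auto. zsimpl. lra.
Qed.

Lemma B_LR k j u u' : cB k (j+1) u -> gB k j u' -> be > 7/2 \/ alone k (IZR k + u).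
Proof. intros Hc Hg. destruct (GBc k j u' Hg) as [[h1 h2]|[h1 h2]].
  - left. lra.
  - right. intros Y2 HY Hne HE. destruct (N8 k j u Hc h1) as [u1 [Hb1 HN1]].
    destruct (N10 k j u Hc h2) as [u2 [Hb2 HN2]]. destruct Hc as [Hu _].
    destruct Hb1 as [Hu1 _]. destruct Hb2 as [Hu2 _].
    destruct (Rtotal_order Y2 (IZR k + u)) as [h|[h|h]].
    + apply (HN1 Y2); auto. zsimpl. lra.
    + auto.
    + apply (HN2 Y2); auto. zsimpl. lra.
Qed.

Lemma core_CC k j1 u1 u1' j2 u2 u2' : be > 5/2 -> cC k j1 u1 -> gC k j1 u1' -> cC k j2 u2 -> gC k j2 u2' ->
  u1 < u2 -> u1' < u2'.
Proof. unfold cC, gC. intros Hb [_ H1] [Hu1' G1] [_ H2] [Hu2' G2] Hlt.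
  rewrite (dd_jj k j1 j2), (dd_u k j1) in H2, G2. rewrite (dd_u k j1) in H1, G1.
  assert (Hm : 0 < 3 * (IZR j2 - IZR j1)).
  { assert (0 < (be - 1/2) * (u2 - u1)) by (apply prod_pos; lra). lra. }
  assert (0 < u2' - u1') by (apply (prod_pos_inv (be - 5/2)); lra). lra.
Qed.

Lemma core_CB k j1 u1 u1' j2 u2 u2' : be > 7/2 -> cC k j1 u1 -> gC k j1 u1' -> cB k (j2+1) u2 -> gB k j2 u2' ->
  u1 < u2 -> u1' < u2'.
Proof. unfold cC, gC, cB, gB. intros Hb [Hu1 H1] [Hu1' G1] [Hu2 H2] [Hu2' G2] Hlt.
  rewrite dd_j1 in H2. rewrite (dd_jj k j1 j2), (dd_u k j1) in H2, G2. rewrite (dd_u k j1) in H1, G1.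
  assert (Hm : (0 <= j2 - j1)%Z).
  { apply Z_ge0. assert (0 < be * (u2 - u1)) by (apply prod_pos; lra). zsimpl. lra. }
  apply IZR_le in Hm. rewrite minus_IZR in Hm.
  assert (0 < u2' - u1') by (apply (prod_pos_inv (be - 7/2)); lra). lra.
Qed.

Lemma core_BC k j1 u1 u1' j2 u2 u2' : be > 7/2 -> cB k (j1+1) u1 -> gB k j1 u1' -> cC k j2 u2 -> gC k j2 u2' ->
  u1 < u2 -> u1' < u2'.
Proof. unfold cC, gC, cB, gB. intros Hb [Hu1 H1] [Hu1' G1] [Hu2 H2] [Hu2' G2] Hlt.
  rewrite dd_j1 in H1. rewrite (dd_jj k j1 j2), (dd_u k j1) in H2, G2. rewrite (dd_u k j1) in H1, G1.
  assert (Hm : (1 <= j2 - j1)%Z).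
  { apply Z_ge1. assert (0 < be * (u2 - u1)) by (apply prod_pos; lra). zsimpl. lra. }
  apply IZR_le in Hm. rewrite minus_IZR in Hm.
  assert (0 < u2' - u1') by (apply (prod_pos_inv (be - 5/2)); lra). lra.
Qed.

Lemma core_BB k j1 u1 u1' j2 u2 u2' : be > 7/2 -> cB k (j1+1) u1 -> gB k j1 u1' -> cB k (j2+1) u2 -> gB k j2 u2' ->
  u1 < u2 -> u1' < u2'.
Proof. unfold cB, gB. intros Hb [_ H1] [Hu1' G1] [_ H2] [Hu2' G2] Hlt.
  rewrite dd_j1 in H1, H2. rewrite (dd_jj k j1 j2), (dd_u k j1) in H2, G2. rewrite (dd_u k j1) in H1, G1.
  assert (Hm : 0 < 3 * (IZR j2 - IZR j1)).
  { assert (0 < (be + 1/2) * (u2 - u1)) by (apply prod_pos; lra). lra. }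
  assert (0 < u2' - u1') by (apply (prod_pos_inv (be - 7/2)); lra). lra.
Qed.

Lemma strips_diff k1 k2 u1 u1' u2 u2' : 0 < u1 < 1 -> 0 < u1' < 1 -> 0 < u2 < 1 -> 0 < u2' < 1 ->
  IZR k1 + u1 < IZR k2 + u2 -> k1 <> k2 -> IZR k1 + u1' < IZR k2 + u2'.
Proof. intros. assert (k1 < k2)%Z.
  { destruct (Z.lt_trichotomy k1 k2) as [h|[h|h]]; auto. contradiction.
    exfalso. assert (hh : (k2 + 1 <= k1)%Z) by lia. apply IZR_le in hh. rewrite plus_IZR in hh. lra. }
  assert (hh : (k1 + 1 <= k2)%Z) by lia. apply IZR_le in hh. rewrite plus_IZR in hh. lra.
Qed.

Lemma pair_strip Y Y' : Pair Y Y' -> (OA Y /\ Y' = Y) \/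
  exists k u u', 0 < u < 1 /\ 0 < u' < 1 /\ Y = IZR k + u /\ Y' = IZR k + u'.
Proof. intros [H|[[k [j [u [u' [Hc [Hg [E1 E2]]]]]]]|[k [j [u [u' [Hc [Hg [E1 E2]]]]]]]]]; auto;
  right; exists k, u, u'; destruct Hc, Hg; auto.
Qed.

Lemma pair_ev Y Y' : Pair Y Y' -> Ev Y.
Proof. intros [[H _]|[[k [j [u [u' [Hc [Hg [E1 E2]]]]]]]|[k [j [u [u' [Hc [Hg [E1 E2]]]]]]]]]; subst.
  - exists A; auto.
  - exists Defs.C. exact (cC_ev _ _ _ Hc).
  - exists B. exact (cB_ev _ _ _ Hc).
Qed.

Lemma pair_in_strip k u u' : 0 < u < 1 -> 0 < u' < 1 -> Pair (IZR k + u) (IZR k + u') ->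
  (exists j, cC k j u /\ gC k j u') \/ (exists j, cB k (j+1) u /\ gB k j u').
Proof.
  intros Hu Hu' [[HA _]|[[k1 [j [v [v' [Hc [Hg [E1 E2]]]]]]]|[k1 [j [v [v' [Hc [Hg [E1 E2]]]]]]]]].
  - exfalso. destruct HA as [kk [jj [E _]]]. apply (Zno01 (kk - k)); zsimpl; lra.
  - pose proof (proj1 Hc). pose proof (proj1 Hg).
    destruct (floor_uniq k k1 u v) as [<- <-]; try lra.
    destruct (floor_uniq k k u' v') as [_ <-]; try lra. left. exists j. auto.
  - pose proof (proj1 Hc). pose proof (proj1 Hg).
    destruct (floor_uniq k k1 u v) as [<- <-]; try lra.
    destruct (floor_uniq k k u' v') as [_ <-]; try lra. right. exists j. auto.
Qed.

Lemma pair_mono Y1 Y1' Y2 Y2' : Pair Y1 Y1' -> Pair Y2 Y2' -> Y1 < Y2 -> Y1' < Y2'.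
Proof.
  intros P1 P2 Hlt.
  destruct (pair_strip _ _ P1) as [[[k1 [j1 [E1 _]]] F1]|[k1 [u1 [u1' [h1 [h1' [E1 F1]]]]]]];
  destruct (pair_strip _ _ P2) as [[[k2 [j2 [E2 _]]] F2]|[k2 [u2 [u2' [h2 [h2' [E2 F2]]]]]]]; subst.
  - lra.
  - assert (hh : (k1 <= k2)%Z). { apply Z.lt_succ_r. apply lt_IZR. unfold Z.succ. zsimpl. lra. }
    apply IZR_le in hh. lra.
  - assert (hh : (k1 < k2)%Z). { apply lt_IZR. lra. }
    assert (hh2 : (k1 + 1 <= k2)%Z) by lia. apply IZR_le in hh2. rewrite plus_IZR in hh2. lra.
  - destruct (Z.eq_dec k1 k2) as [<-|ne].
    2: { apply (strips_diff k1 k2 u1 u1' u2 u2'); auto. }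
    rename k1 into k.
    assert (Hu : u1 < u2) by lra. apply Rplus_lt_compat_l.
    destruct (pair_in_strip k u1 u1' h1 h1' P1) as [[j [Hc Hg]]|[j [Hc Hg]]];
    destruct (pair_in_strip k u2 u2' h2 h2' P2) as [[j' [Hc' Hg']]|[j' [Hc' Hg']]].
    + destruct (C_LR _ _ _ _ Hc Hg) as [b1|al1];
      [destruct (C_LR _ _ _ _ Hc' Hg') as [b2|al2]|].
      * apply (core_CC k j u1 u1' j' u2 u2'); auto.
      * exfalso. apply (al2 (IZR k + u1)); [lra|lra|exists Defs.C; exact (cC_ev _ _ _ Hc)].
      * exfalso. apply (al1 (IZR k + u2)); [lra|lra|exists Defs.C; exact (cC_ev _ _ _ Hc')].
    + destruct (B_LR _ _ _ _ Hc' Hg') as [b2|al2].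
      * apply (core_CB k j u1 u1' j' u2 u2'); auto.
      * exfalso. apply (al2 (IZR k + u1)); [lra|lra|exists Defs.C; exact (cC_ev _ _ _ Hc)].
    + destruct (B_LR _ _ _ _ Hc Hg) as [b1|al1].
      * apply (core_BC k j u1 u1' j' u2 u2'); auto.
      * exfalso. apply (al1 (IZR k + u2)); [lra|lra|exists Defs.C; exact (cC_ev _ _ _ Hc')].
    + destruct (B_LR _ _ _ _ Hc Hg) as [b1|al1].
      * apply (core_BB k j u1 u1' j' u2 u2'); auto.
      * exfalso. apply (al1 (IZR k + u2)); [lra|lra|exists B; exact (cB_ev _ _ _ Hc')].
Qed.


Lemma pair_uniq Y Y1' Y2' : Pair Y Y1' -> Pair Y Y2' -> Y1' = Y2'.
Proof.
  intros P1 P2.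
  destruct (pair_strip _ _ P1) as [[HA1 F1]|[k1 [u1 [u1' [h1 [h1' [E1 F1]]]]]]];
  destruct (pair_strip _ _ P2) as [[HA2 F2]|[k2 [u2 [u2' [h2 [h2' [E2 F2]]]]]]]; subst.
  - auto.
  - exfalso. destruct HA1 as [kk [jj [E _]]]. apply (Zno01 (kk - k2)); zsimpl; lra.
  - exfalso. destruct HA2 as [kk [jj [E _]]]. apply (Zno01 (kk - k1)); zsimpl; lra.
  - destruct (floor_uniq k1 k2 u1 u2) as [<- <-]; try lra. rename k1 into k.
    f_equal.
    destruct (pair_in_strip k u1 u1' h1 h1' P1) as [[j [Hc Hg]]|[j [Hc Hg]]];
    destruct (pair_in_strip k u1 u2' h1 h2' P2) as [[j' [Hc' Hg']]|[j' [Hc' Hg']]].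
    + destruct Hc as [_ H], Hc' as [_ H'], Hg as [_ G], Hg' as [_ G'].
      rewrite (dd_jj k j j') in H', G'.
      assert (j' - j = 0)%Z by (apply Z_eq0; zsimpl; lra).
      assert (IZR j' = IZR j) by (f_equal; lia).
      destruct (GCc k j u1' (conj h1' G)) as [[a b]|[a b]].
      * assert (0 < (be - 5/2)) by lra. rewrite dd_u in G, G'.
        assert (HZ : (be - 5/2) * (u1' - u2') = 0) by lra.
        destruct (Rmult_integral _ _ HZ); lra.
      * assert (0 < (5/2 - be)) by lra. rewrite dd_u in G, G'.
        assert (HZ : (5/2 - be) * (u1' - u2') = 0) by lra.
        destruct (Rmult_integral _ _ HZ); lra.
    + exfalso. assert (Defs.C = B) by (apply (OL_uniq Defs.C B (IZR k + u1)); [exact (cC_ev _ _ _ Hc)|exact (cB_ev _ _ _ Hc')]). discriminate.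
    + exfalso. assert (B = Defs.C) by (apply (OL_uniq B Defs.C (IZR k + u1)); [exact (cB_ev _ _ _ Hc)|exact (cC_ev _ _ _ Hc')]). discriminate.
    + destruct Hc as [_ H], Hc' as [_ H'], Hg as [_ G], Hg' as [_ G'].
      rewrite (dd_jj k j j') in G'. rewrite (dd_jj k (j+1) (j'+1)), !plus_IZR in H'.
      assert (j' - j = 0)%Z by (apply Z_eq0; zsimpl; lra).
      assert (IZR j' = IZR j) by (f_equal; lia).
      destruct (GBc k j u1' (conj h1' G)) as [[a b]|[a b]].
      * assert (0 < (be - 7/2)) by lra. rewrite dd_u in G, G'.
        assert (HZ : (be - 7/2) * (u1' - u2') = 0) by lra.
        destruct (Rmult_integral _ _ HZ); lra.
      * assert (0 < (7/2 - be)) by lra. rewrite dd_u in G, G'.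
        assert (HZ : (7/2 - be) * (u1' - u2') = 0) by lra.
        destruct (Rmult_integral _ _ HZ); lra.
Qed.


Definition csG (Ys : Z -> R) (w : Z -> label) : Prop :=
  (forall n, Ys n < Ys (n+1)%Z) /\ (forall Y, (exists l, GL l Y) -> exists n, Y = Ys n) /\
  (forall n, GL (w n) (Ys n)).

Lemma assemble Ys Ys' w w' : csO Ys w -> csG Ys' w' -> derived_upto_shift w w'.
Proof.
  intros Hcs Hcg. pose proof Hcs as [Hinc [Hcov Hlab]]. pose proof Hcg as [Hinc' [Hcov' Hlab']].
  assert (Hb : forall k, exists n, sandwiched w n /\ Pair (Ys n) (Ys' k)).
  { intro k. apply (pair_b Ys w (w' k)); auto. }
  set (sigma := fun k => proj1_sig (constructive_indefinite_description _ (Hb k))).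
  assert (Hs : forall k, sandwiched w (sigma k) /\ Pair (Ys (sigma k)) (Ys' k)).
  { intro k. unfold sigma. destruct (constructive_indefinite_description _ (Hb k)); auto. }
  exists sigma. split; [|split; [|split]].
  - intro k. destruct (Hs k) as [_ P1]. destruct (Hs (k+1)%Z) as [_ P2].
    destruct (Z_lt_le_dec (sigma k) (sigma (k+1)%Z)) as [h|h]; auto. exfalso.
    assert (Hk := Hinc' k).
    destruct (Z_le_lt_eq_dec _ _ h) as [h'|h'].
    + pose proof (mono_lt Ys _ _ Hinc h').
      pose proof (pair_mono _ _ _ _ P2 P1 H). lra.
    + rewrite h' in P2. pose proof (pair_uniq _ _ _ P1 P2). lra.
  - intro k. apply Hs.
  - intros n Hn. destruct (pair_a Ys w n Hcs Hn) as [Y' P].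
    assert (HG : GL (w n) Y') by (apply (pair_label (Ys n)); auto).
    destruct (Hcov' Y') as [k Ek]. { exists (w n); auto. }
    exists k. subst Y'. destruct (Hs k) as [_ Pk].
    apply (mono_inj Ys); auto.
    destruct (Rtotal_order (Ys (sigma k)) (Ys n)) as [h|[h|h]]; auto; exfalso.
    + pose proof (pair_mono _ _ _ _ Pk P h). lra.
    + pose proof (pair_mono _ _ _ _ P Pk h). lra.
  - intro k. destruct (Hs k) as [_ Pk].
    apply (GL_uniq _ _ (Ys' k)); auto. apply (pair_label (Ys (sigma k))); auto.
Qed.

End YS.

Lemma other_other l : l <> A -> other (other l) = l.
Proof. intros _; destruct l; reflexivity. Qed.

Lemma alt_derived (w w' : Z -> label) :
  (forall n, w n <> A /\ w (n+1)%Z = other (w n)) ->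
  (forall n, w' n <> A /\ w' (n+1)%Z = other (w' n)) ->
  derived_upto_shift w w'.
Proof.
  intros Hw Hw'.
  assert (Hback : forall (v : Z -> label), (forall n, v n <> A /\ v (n+1)%Z = other (v n)) ->
            forall n, v (n-1)%Z = other (v n)).
  { intros v Hv n. destruct (Hv (n-1)%Z) as [h1 h2]. replace (n-1+1)%Z with n in h2 by lia.
    rewrite h2. symmetry. apply other_other; auto. }
  set (c0 := if label_eq_dec (w' 0%Z) (w 0%Z) then 0%Z else 1%Z).
  exists (fun k => (k + c0)%Z). split; [|split; [|split]].
  - intro k. lia.
  - intro k. unfold sandwiched. rewrite (Hback w Hw). destruct (Hw (k+c0)%Z) as [h1 h2].
    rewrite h2. reflexivity.
  - intros n _. exists (n - c0)%Z. lia.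
  - assert (H0 : w' 0%Z = w (0 + c0)%Z).
    { unfold c0. destruct (label_eq_dec (w' 0%Z) (w 0%Z)) as [e|ne].
      - exact e.
      - destruct (Hw 0%Z) as [a1 a2]. destruct (Hw' 0%Z) as [b1 b2]. change (0 + 1)%Z with 1%Z in *. rewrite a2.
        destruct (w' 0%Z), (w 0%Z); simpl in *; congruence. }
    intro k. induction k using Z.peano_ind.
    + exact H0.
    + rewrite <- Z.add_1_r. destruct (Hw' k) as [_ h]. rewrite h, IHk.
      destruct (Hw (k + c0)%Z) as [_ h']. rewrite <- h'. f_equal. lia.
    + rewrite <- Z.sub_1_r. rewrite (Hback w' Hw'), IHk, <- (Hback w Hw). f_equal. lia.
Qed.

Lemma s3_sq : s3 * s3 = 3.
Proof. unfold s3. apply sqrt_sqrt. lra. Qed.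

Lemma gamma_line p v t : line_pt (gamma_map p) (gamma_map v) t = gamma_map (line_pt p v t).
Proof. destruct p, v. unfold line_pt, gamma_map. cbn [fst snd]. f_equal; ring. Qed.

Lemma gamma_pt x Y : gamma_map (x, Y * hh) = (- x + 3 * Y, Y * hh).
Proof. unfold gamma_map. cbn [fst snd]. f_equal. unfold hh.
  replace (2 * s3 * (Y * (s3 / 2))) with (Y * (s3 * s3)) by field. rewrite s3_sq. ring. Qed.

Section Bridge.
Variables al be : R.
Hypothesis Hbe : 3/2 <= be.
Hypothesis NV : forall k j, dd al be k j 0 <> 1 /\ dd al be k j 0 <> 2.

Lemma onside_iff l Y : on_side l (al + be * Y, Y * hh) <-> OL al be l Y.
Proof.
  pose proof hh_pos as Hh.
  destruct l; simpl.
  - rewrite onA_iff. unfold sideA, OA. split.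
    + intros [k [j [Hy Hx]]]. exists k, j.
      assert (E : Y = IZR k) by (apply (Rmult_eq_reg_r hh); lra). split; auto.
      destruct (NV k j) as [n1 n2]. unfold dd in *. subst Y. rewrite Rplus_0_r in *.
      split; apply Rle_neq_lt' || idtac; lra.
    + intros [k [j [E Hd]]]. exists k, j. subst Y. unfold dd in Hd. rewrite Rplus_0_r in Hd. split; [lra|]. split; lra.
  - rewrite onB_iff. unfold sideB, OB. split.
    + intros [k [j [u [Hu [Hy Hx]]]]].
      assert (E : Y = IZR k + u) by (apply (Rmult_eq_reg_r hh); lra).
      exists k, j, u. subst Y.
      assert (u <> 0). { intro e0. subst u. apply (proj1 (NV k j)). unfold dd. lra. }
      assert (u <> 1). { intro e0. subst u. apply (proj2 (NV (k+1)%Z (j-1)%Z)). unfold dd. zsimpl. lra. }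
      split. lra. split; auto. unfold dd. lra.
    + intros [k [j [u [Hu [E Hd]]]]]. exists k, j, u. subst Y. unfold dd in Hd.
      split. lra. split; auto. lra.
  - rewrite onC_iff. unfold sideC, OC. split.
    + intros [k [j [u [Hu [Hy Hx]]]]].
      assert (E : Y = IZR k + u) by (apply (Rmult_eq_reg_r hh); lra).
      exists k, j, u. subst Y.
      assert (u <> 0). { intro e0. subst u. apply (proj2 (NV k j)). unfold dd. lra. }
      assert (u <> 1). { intro e0. subst u. apply (proj1 (NV (k+1)%Z j)). unfold dd. zsimpl. lra. }
      split. lra. split; auto. unfold dd. lra.
    + intros [k [j [u [Hu [E Hd]]]]]. exists k, j, u. subst Y. unfold dd in Hd.
      split. lra. split; auto. lra.
Qed.

Lemma gonside_iff l Y : on_side l (gamma_map (al + be * Y, Y * hh)) <-> GL al be l Y.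
Proof.
  pose proof hh_pos as Hh. rewrite gamma_pt.
  destruct l; simpl.
  - rewrite onA_iff. unfold sideA, OA. split.
    + intros [k [j [Hy Hx]]].
      assert (E : Y = IZR k) by (apply (Rmult_eq_reg_r hh); lra). exists k, (-j-1)%Z. split; auto.
      destruct (NV k (-j-1)%Z) as [n1 n2]. unfold dd in *. subst Y. rewrite Rplus_0_r in *. zsimpl.
      zsimpl_in n1. zsimpl_in n2.
      destruct (Req_dec (al + be * IZR k - 3 * IZR k / 2 - 3 * (- IZR j - 1)) 1); [exfalso; lra|].
      destruct (Req_dec (al + be * IZR k - 3 * IZR k / 2 - 3 * (- IZR j - 1)) 2); [exfalso; lra|].
      split; lra.
    + intros [k [j [E Hd]]]. exists k, (-j-1)%Z. subst Y. unfold dd in Hd. rewrite Rplus_0_r in Hd.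
      split; [lra|]. zsimpl. split; lra.
  - rewrite onB_iff. unfold sideB, GBv. split.
    + intros [k [j [u [Hu [Hy Hx]]]]].
      assert (E : Y = IZR k + u) by (apply (Rmult_eq_reg_r hh); lra).
      exists k, (-j-1)%Z, u. subst Y.
      assert (u <> 0). { intro e0. subst u. apply (proj2 (NV k (-j-1)%Z)). unfold dd. zsimpl. lra. }
      assert (u <> 1). { intro e0. subst u. apply (proj1 (NV (k+1)%Z (-j)%Z)). unfold dd. zsimpl. lra. }
      split. lra. split; auto. unfold dd. zsimpl. lra.
    + intros [k [j [u [Hu [E Hd]]]]]. exists k, (-j-1)%Z, u. subst Y. unfold dd in Hd.
      split. lra. split; auto. zsimpl. lra.
  - rewrite onC_iff. unfold sideC, GCv. split.
    + intros [k [j [u [Hu [Hy Hx]]]]].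
      assert (E : Y = IZR k + u) by (apply (Rmult_eq_reg_r hh); lra).
      exists k, (-j-1)%Z, u. subst Y.
      assert (u <> 0). { intro e0. subst u. apply (proj1 (NV k (-j-1)%Z)). unfold dd. zsimpl. lra. }
      assert (u <> 1). { intro e0. subst u. apply (proj2 (NV (k+1)%Z (-j-1)%Z)). unfold dd. zsimpl. lra. }
      split. lra. split; auto. unfold dd. zsimpl. lra.
    + intros [k [j [u [Hu [E Hd]]]]]. exists k, (-j-1)%Z, u. subst Y. unfold dd in Hd.
      split. lra. split; auto. zsimpl. lra.
Qed.

End Bridge.

Lemma pos_case (px py c s : R) (w w' : Z -> label) :
  0 < s -> s3 * s <= c -> avoids_marked (px, py) (c, s) ->
  cutting_sequence (px, py) (c, s) w ->
  cutting_sequence (gamma_map (px, py)) (gamma_map (c, s)) w' ->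
  derived_upto_shift w w'.
Proof.
  intros Hs Hc Hav [tt [Hinc [Hcov Hlab]]] [tt' [Hinc' [Hcov' Hlab']]].
  pose proof hh_pos as Hh.
  set (al := px - c * py / s). set (be := c * hh / s).
  set (Yf := fun t => (py + t * s) / hh).
  assert (LP : forall t, line_pt (px, py) (c, s) t = (al + be * Yf t, Yf t * hh)).
  { intro t. unfold line_pt, al, be, Yf. cbn [fst snd]. f_equal; field; lra. }
  assert (Hbe : 3/2 <= be).
  { assert (E : be * s = c * hh) by (unfold be; field; lra).
    assert (E2 : s3 * hh = 3/2) by (unfold hh; pose proof s3_sq; lra).
    assert (c * hh >= s3 * s * hh) by (apply Rle_ge, Rmult_le_compat_r; lra).
    assert (be * s >= 3/2 * s) by nra. nra. }
  assert (Tinv : forall Y, Yf ((Y * hh - py) / s) = Y).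
  { intro Y. unfold Yf. field. split; lra. }
  assert (NV : forall k j, dd al be k j 0 <> 1 /\ dd al be k j 0 <> 2).
  { intros k j. set (t0 := (IZR k * hh - py) / s).
    assert (Hp := LP t0). unfold t0 in Hp. rewrite Tinv in Hp.
    split; intro E; apply (Hav ((IZR k * hh - py) / s)); rewrite Hp; apply vert_marked;
      exists k, j; split; auto; [left|right]; unfold dd in E; lra. }
  assert (Yinc : forall a b, a < b -> Yf a < Yf b).
  { intros a b hab. unfold Yf. apply Rmult_lt_compat_r. apply Rinv_0_lt_compat; lra. nra. }
  apply (assemble al be Hbe NV (fun n => Yf (tt n)) (fun n => Yf (tt' n))).
  - split; [|split].
    + intro n. apply Yinc. apply Hinc.
    + intros Y [l HL]. destruct (Hcov ((Y * hh - py) / s)) as [n En].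
      { exists l. rewrite LP, Tinv. apply onside_iff; auto. }
      exists n. rewrite <- En. rewrite Tinv. auto.
    + intro n. apply (onside_iff al be NV). rewrite <- LP. apply Hlab.
  - split; [|split].
    + intro n. apply Yinc. apply Hinc'.
    + intros Y [l HL]. destruct (Hcov' ((Y * hh - py) / s)) as [n En].
      { exists l. rewrite gamma_line, LP, Tinv. apply gonside_iff; auto. }
      exists n. rewrite <- En. rewrite Tinv. auto.
    + intro n. apply (gonside_iff al be NV). rewrite <- LP, <- gamma_line. apply Hlab'.
Qed.

Theorem mainTheorem4 :
  forall (p : pt) (theta : R),
    0 <= theta <= PI / 6 ->
    avoids_marked p (cos theta, sin theta) ->
    forall w w' : Z -> label,
      cutting_sequence p (cos theta, sin theta) w ->
      cutting_sequence (gamma_map p) (gamma_map (cos theta, sin theta)) w' ->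
      derived_upto_shift w w'.
Proof.
  intros [px py] theta Hth Hav w w' H1 H2.
  pose proof PI_RGT_0 as HPI.
  destruct (Rle_lt_or_eq_dec 0 theta (proj1 Hth)) as [Hpos|Hz].
  - apply (pos_case px py (cos theta) (sin theta) w w'); auto.
    + apply sin_gt_0; lra.
    + assert (Hcp : 0 <= cos (theta + PI/3)) by (apply cos_ge_0; lra).
      rewrite cos_plus, cos_PI3, sin_PI3 in Hcp. unfold s3. lra.
  - subst theta. rewrite cos_0, sin_0 in Hav, H1, H2.
    assert (Hpy : forall k, py <> IZR k * hh).
    { intros k E. apply (Hav (3 * IZR k / 2 + 1 - px)). unfold line_pt. cbn [fst snd].
      replace (px + (3 * IZR k / 2 + 1 - px) * 1) with (3 * IZR k / 2 + 3 * IZR 0 + 1) by (simpl; ring).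
      replace (py + (3 * IZR k / 2 + 1 - px) * 0) with (IZR k * hh) by lra.
      apply vert_marked. exists k, 0%Z. split; auto. }
    apply alt_derived.
    + apply (horiz_alt px 1 py); auto; lra.
    + unfold gamma_map in H2. cbn [fst snd] in H2.
      apply (horiz_alt (- px + 2 * s3 * py) (- 1 + 2 * s3 * 0) py); auto; lra.
Qed.
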